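(* Let $L\subseteq\{a,b\}^*$ be the set of words whose last maximal block of the form $a^+b^*$ contains at least as many $a$'s as $b$'s; precisely, $L$ consists of the empty word together with all words $u\,a^nb^m$ where $u\in\{\varepsilon\}\cup\{a,b\}^*b$, $n\ge 1$ and $0\le m\le n$. Then $L\in\mathrm{CN}_1$ and $L\notin\mathrm{CH}$, i.e. $L$ is recognised by some (nondeterministic) $1$-VASS under coverability acceptance but by no history-deterministic $k$-VASS (for any $k$) under coverability acceptance.
   Context: Fix a finite alphabet $\Sigma$. A $k$-dimensional vector addition system with states ($k$-VASS) is a tuple $(Q,q_0,F,\delta)$ where $Q$ is a finite set of states, $q_0\in Q$ is initial, $F\subseteq Q$ is the set of accepting states, and $\delta\subseteq Q\times\Sigma\times\mathbb{Z}^k\times Q$ is a finite set of transitions (no $\varepsilon$-transitions). A run on a word $w=a_1\cdots a_n$ is a sequence of transitions $(p_{i-1},a_i,d_i,p_i)$ with $p_0=q_0$ such that the counter vectors $v_0=\vec 0$, $v_i=v_{i-1}+d_i$ all lie in $\mathbb{N}^k$. Under coverability acceptance the run is accepting if $p_n\in F$. The language is the set of words having an accepting run. A VASS is history-deterministic if there is a resolver, i.e. a function $r$ mapping each finite sequence of transitions and each letter $a$ to a transition labelled $a$, such that for every word $w$ in the language, the sequence of transitions obtained by successively applying $r$ to the letters of $w$ is a run on $w$ (counters stay nonnegative) and is accepting. $\mathrm{CN}_k$ (resp. $\mathrm{CH}_k$) is the class of languages recognised by arbitrary (resp. history-deterministic) $k$-VASS under coverability acceptance, and $\mathrm{CH}=\bigcup_{k\ge1}\mathrm{CH}_k$.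 *)

(* Defs.v *)
From mathcomp Require Import all_boot all_order all_algebra.
Set Implicit Arguments. Unset Strict Implicit. Unset Printing Implicit Defensive.
Import Order.TTheory GRing.Theory Num.Theory.
Local Open Scope ring_scope.

Record VASS (Sigma : finType) (k : nat) := MkVASS {
  state : finType;
  init : state;
  final : pred state;
  trans : seq (state * Sigma * {ffun 'I_k -> int} * state)
}.
Arguments state {Sigma k} v.
Arguments init {Sigma k} v.
Arguments final {Sigma k} v.
Arguments trans {Sigma k} v.

Section Runs.
Variables (Sigma : finType) (k : nat) (V : VASS Sigma k).

Definition transition := (state V * Sigma * {ffun 'I_k -> int} * state V)%type.

Definition tsrc (t : transition) : state V := t.1.1.1.
Definition tlab (t : transition) : Sigma := t.1.1.2.
Definition tvec (t : transition) : {ffun 'I_k -> int} := t.1.2.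
Definition tdst (t : transition) : state V := t.2.

Fixpoint is_run_from (p : state V) (v : 'I_k -> int) (w : seq Sigma)
    (ts : seq transition) : Prop :=
  match w, ts with
  | [::], [::] => True
  | a :: w', t :: ts' =>
      [/\ t \in trans V, tsrc t = p, tlab t = a,
          (forall i, 0 <= v i + tvec t i) &
          is_run_from (tdst t) (fun i => v i + tvec t i) w' ts']
  | _, _ => False
  end.

Definition is_run (w : seq Sigma) (ts : seq transition) : Prop :=
  is_run_from (init V) (fun _ => 0) w ts.

(* Coverability acceptance: the last state is accepting. *)
Definition accepting_run (w : seq Sigma) (ts : seq transition) : Prop :=
  is_run w ts /\ final V (last (init V) (map tdst ts)).

Definition accepts (w : seq Sigma) : Prop :=
  exists ts, accepting_run w ts.

Fixpoint resolve (r : seq transition -> Sigma -> transition)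
    (ts : seq transition) (w : seq Sigma) : seq transition :=
  match w with
  | [::] => ts
  | a :: w' => resolve r (rcons ts (r ts a)) w'
  end.

Definition is_resolver (r : seq transition -> Sigma -> transition) : Prop :=
  (forall ts a, r ts a \in trans V /\ tlab (r ts a) = a) /\
  (forall w, accepts w -> accepting_run w (resolve r [::] w)).

Definition history_deterministic : Prop := exists r, is_resolver r.

End Runs.

Definition CN (Sigma : finType) (k : nat) (L : seq Sigma -> Prop) : Prop :=
  exists V : VASS Sigma k, forall w, accepts V w <-> L w.

Definition CHk (Sigma : finType) (k : nat) (L : seq Sigma -> Prop) : Prop :=
  exists V : VASS Sigma k, history_deterministic V /\
    forall w, accepts V w <-> L w.

Definition CH (Sigma : finType) (L : seq Sigma -> Prop) : Prop :=
  exists k, (1 <= k)%N /\ CHk k L.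

Definition la : bool := true.
Definition lb : bool := false.

Definition Lab (w : seq bool) : Prop :=
  w = [::] \/
  exists (u : seq bool) (n m : nat),
    (u = [::] \/ exists u', u = rcons u' lb) /\
    (1 <= n)%N /\ (m <= n)%N /\
    w = u ++ nseq n la ++ nseq m lb.

(* Main.v *)
Require Import Defs.
From HB Require Import structures.
From mathcomp Require Import all_boot all_order all_algebra zify ring.
From Stdlib Require Import Classical IndefiniteDescription.
Set Implicit Arguments. Unset Strict Implicit. Unset Printing Implicit Defensive.
Import Order.TTheory GRing.Theory Num.Theory.
Local Open Scope ring_scope.

Fixpoint cntp (x : bool) (l : seq bool) : nat :=
  if l is y :: l' then (if y == x then (cntp x l').+1 else 0%N) else 0%N.

Lemma cntp_nseq x n l : cntp x (nseq n x ++ l) = (n + cntp x l)%N.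
Proof. by elim: n => //= n IH; rewrite eqxx IH. Qed.

Definition endb (X : seq bool) := last lb X = lb.

Lemma endb_cat X Y : endb X -> endb Y -> endb (X ++ Y).
Proof. by rewrite /endb last_cat => ->. Qed.

Lemma endb_nil : endb [::]. Proof. by []. Qed.

Lemma cntp_revX X : endb X -> cntp la (rev X) = 0%N.
Proof.
case/lastP: X => [|X x] //; rewrite /endb last_rcons => ->.
by rewrite rev_rcons.
Qed.

Definition lbk (W : seq bool) :=
  let m := cntp lb (rev W) in (m, cntp la (drop m (rev W))).

Lemma lbk_eq X s t : endb X -> (0 < s)%N ->
  lbk (X ++ nseq s la ++ nseq t lb) = (t, s).
Proof.
move=> hX hs; rewrite /lbk !rev_cat !rev_nseq -catA (cntp_nseq lb).
have -> : cntp lb (nseq s la ++ rev X) = 0%N by case: s hs.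
rewrite addn0 drop_size_cat ?size_nseq // (cntp_nseq la).
by rewrite (cntp_revX hX) addn0.
Qed.

Lemma Lab_char X s t : endb X -> (0 < s)%N ->
  Lab (X ++ nseq s la ++ nseq t lb) <-> (t <= s)%N.
Proof.
move=> hX hs; split.
- case=> [|[u [n [m [hu [hn [hmn E]]]]]]].
  + by case: X hX => //; case: s hs.
  have hu' : endb u by case: hu => [->|[u' ->]] //; rewrite /endb last_rcons.
  have := lbk_eq t hX hs; rewrite E (lbk_eq m hu' hn).
  by case=> <- <-.
- move=> hts; right; exists X, s, t; split => //.
  case/lastP: X hX => [|X x]; [by left|].
  by rewrite /endb last_rcons => ->; right; exists X.
Qed.

Lemma decomp w : exists X n, endb X /\ w = X ++ nseq n la.
Proof.
elim/last_ind: w => [|w x [X [n [hX ->]]]]; first by exists [::], 0%N.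
case: x.
- by exists X, n.+1; split=> //; rewrite -cats1 -catA; congr (_ ++ _); elim: n {hX} => //= n ->.
- exists (rcons (X ++ nseq n la) false), 0%N; split; last by rewrite cats0.
  by rewrite /endb last_rcons.
Qed.

Lemma Lab_rcons_a w : Lab (w ++ [:: la]).
Proof.
have [X [n [hX ->]]] := decomp w.
have -> : (X ++ nseq n la) ++ [:: la] = X ++ nseq n.+1 la ++ nseq 0 lb.
  by rewrite cats0 -catA; congr (_ ++ _); elim: n {hX} => //= n ->.
by apply/Lab_char.
Qed.

Lemma pigeon (T : finType) (lab : nat -> T) :
  exists l, forall n, exists i, (n <= i)%N /\ lab i = l.
Proof.
apply: NNPP => H.
have H' : forall l, exists n, forall i, (n <= i)%N -> lab i <> l.
  move=> l; apply: NNPP => H2; apply: H; exists l => n.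
  apply: NNPP => H3; apply: H2; exists n => i ni E; apply: H3; by exists i.
have [f Hf] := fin_all_exists H'.
pose N := (\max_(l : T) f l)%N.
by apply: (Hf (lab N) N) => //; apply: leq_bigmax.
Qed.

Lemma extract (g : nat -> nat) (P : nat -> Prop) :
  (forall n, exists i, (n <= i)%N /\ P i) ->
  forall n, exists i, (n <= i)%N /\ P i /\ forall j, (i <= j)%N -> P j -> (g i <= g j)%N.
Proof.
move=> HP n; apply: NNPP => Hn.
have desc : forall i, (n <= i)%N -> P i -> exists j, (i <= j)%N /\ P j /\ (g j < g i)%N.
  move=> i ni Pi; apply: NNPP => H; apply: Hn; exists i; split=> //; split=> // j ij Pj.
  case: leqP => // lt; exfalso; apply: H; by exists j.
have : forall v i, (n <= i)%N -> P i -> (g i <= v)%N -> False.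
  elim=> [|v IH] i ni Pi gi.
  - have [j [_ [_ ]]] := desc i ni Pi; lia.
  - have [j [ij [Pj gj]]] := desc i ni Pi.
    apply: (IH j) => //; [exact: leq_trans ij | lia].
have [i [ni Pi]] := HP n.
by move/(_ (g i) i ni Pi (leqnn _)).
Qed.

Lemma dickson_inf k (f : nat -> 'I_k -> nat) (P : nat -> Prop) :
  (forall n, exists i, (n <= i)%N /\ P i) ->
  forall cs : seq 'I_k, exists Q : nat -> Prop,
    (forall n, exists i, (n <= i)%N /\ Q i) /\ (forall i, Q i -> P i) /\
    (forall i j, Q i -> Q j -> (i <= j)%N -> forall c, c \in cs -> (f i c <= f j c)%N).
Proof.
move=> HP; elim=> [|c cs [Q1 [HQ1 [Q1P Q1m]]]].
  by exists P; split=> //; split.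
exists (fun i => Q1 i /\ forall j, (i <= j)%N -> Q1 j -> (f i c <= f j c)%N).
split; first exact: extract.
split; first by move=> i [/Q1P].
move=> i j [Qi Hi] [Qj Hj] ij c'; rewrite in_cons => /orP[/eqP->|cc].
- exact: Hi.
- exact: Q1m.
Qed.

Lemma dickson (T : finType) k (f : nat -> 'I_k -> nat) (lab : nat -> T) :
  exists i j, (i < j)%N /\ lab i = lab j /\ forall c, (f i c <= f j c)%N.
Proof.
have [l Hl] := pigeon lab.
have [Q [HQ [QP Qm]]] := dickson_inf f Hl (enum 'I_k).
have [i [_ Qi]] := HQ 0%N.
have [j [ij Qj]] := HQ i.+1.
exists i, j; split => //; split; first by rewrite (QP _ Qi) (QP _ Qj).
move=> c; apply: Qm => //; first exact: ltnW.
by rewrite mem_enum.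
Qed.

Definition sumv (Sigma : finType) k (V : VASS Sigma k) (ts : seq (transition V)) (i : 'I_k) : int :=
  \sum_(t <- ts) tvec t i.

Lemma sumv_nil (Sigma : finType) k (V : VASS Sigma k) i : sumv (V:=V) [::] i = 0.
Proof. by rewrite /sumv big_nil. Qed.

Lemma sumv_cons (Sigma : finType) k (V : VASS Sigma k) t ts i :
  sumv (V:=V) (t :: ts) i = tvec t i + sumv ts i.
Proof. by rewrite /sumv big_cons. Qed.

Lemma sumv_cat (Sigma : finType) k (V : VASS Sigma k) ts1 ts2 i :
  sumv (V:=V) (ts1 ++ ts2) i = sumv ts1 i + sumv ts2 i.
Proof. by rewrite /sumv big_cat. Qed.

Lemma run_ext (Sigma : finType) k (V : VASS Sigma k) p v v' w ts :
  v =1 v' -> is_run_from (V:=V) p v w ts -> is_run_from p v' w ts.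
Proof.
elim: w p v v' ts => [|a w IH] p v v' [|t ts] //= E [H1 H2 H3 H4 H5]; split => //.
- by move=> i; rewrite -E.
- by apply: IH H5 => i /=; rewrite E.
Qed.

Lemma run_mono (Sigma : finType) k (V : VASS Sigma k) p v v' w ts :
  (forall i, v i <= v' i) -> is_run_from (V:=V) p v w ts -> is_run_from p v' w ts.
Proof.
elim: w p v v' ts => [|a w IH] p v v' [|t ts] //= E [H1 H2 H3 H4 H5]; split => //.
- by move=> i; apply: le_trans (H4 i) _; rewrite lerD2r.
- by apply: IH H5 => i /=; rewrite lerD2r.
Qed.

Lemma run_size (Sigma : finType) k (V : VASS Sigma k) p v w ts :
  is_run_from (V:=V) p v w ts -> size ts = size w.
Proof.
by elim: w p v ts => [|a w IH] p v [|t ts] //= [_ _ _ _ /IH ->].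
Qed.

Lemma run_nonneg (Sigma : finType) k (V : VASS Sigma k) p v w ts :
  is_run_from (V:=V) p v w ts -> (forall i, 0 <= v i) -> forall i, 0 <= v i + sumv ts i.
Proof.
elim: w p v ts => [|a w IH] p v [|t ts] //=.
- by move=> _ H i; rewrite sumv_nil addr0.
- move=> [_ _ _ H4 H5] _ i; rewrite sumv_cons addrA; exact: (IH _ _ _ H5 H4).
Qed.

Lemma run_cat (Sigma : finType) k (V : VASS Sigma k) p v x1 x2 ts1 ts2 :
  is_run_from (V:=V) p v x1 ts1 ->
  is_run_from (last p (map (@tdst _ _ V) ts1)) (fun i => v i + sumv ts1 i) x2 ts2 ->
  is_run_from p v (x1 ++ x2) (ts1 ++ ts2).
Proof.
elim: x1 p v ts1 => [|a x1 IH] p v [|t ts1] //=.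
- by move=> _ H; apply: run_ext H => i; rewrite sumv_nil addr0.
- move=> [H1 H2 H3 H4 H5] H; split => //; apply: IH H5 _.
  by apply: run_ext H => i /=; rewrite sumv_cons addrA.
Qed.

Lemma run_split (Sigma : finType) k (V : VASS Sigma k) p v x1 x2 ts :
  is_run_from (V:=V) p v (x1 ++ x2) ts -> exists ts1 ts2, ts = ts1 ++ ts2 /\
  is_run_from p v x1 ts1 /\
  is_run_from (last p (map (@tdst _ _ V) ts1)) (fun i => v i + sumv ts1 i) x2 ts2.
Proof.
elim: x1 p v ts => [|a x1 IH] p v ts /=.
- move=> H; exists [::], ts; split => //; split => //.
  by apply: run_ext H => i; rewrite sumv_nil addr0.
- case: ts => [|t ts] //= [H1 H2 H3 H4 H5].
  have [ts1 [ts2 [-> [R1 R2]]]] := IH _ _ _ H5.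
  exists (t :: ts1), ts2; split => //; split => //.
  by apply: run_ext R2 => i /=; rewrite sumv_cons addrA.
Qed.

Definition Reach (Sigma : finType) k (V : VASS Sigma k) (p : state V) (v : 'I_k -> int)
  (w : seq Sigma) (q : state V) (v' : 'I_k -> int) :=
  exists ts, is_run_from p v w ts /\ last p (map (@tdst _ _ V) ts) = q /\
    forall i, v i + sumv ts i = v' i.

Lemma Reach_nil (Sigma : finType) k (V : VASS Sigma k) (p : state V) v v' :
  v =1 v' -> Reach p v [::] p v'.
Proof. by move=> E; exists [::]; split => //; split => // i; rewrite sumv_nil addr0. Qed.

Lemma Reach_cat (Sigma : finType) k (V : VASS Sigma k) (p q q' : state V) v v1 v2 v3 x y :
  Reach p v x q v1 -> Reach q v2 y q' v3 -> v1 =1 v2 -> Reach p v (x ++ y) q' v3.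
Proof.
move=> [ts1 [R1 [L1 E1]]] [ts2 [R2 [L2 E2]]] E.
exists (ts1 ++ ts2); split; [apply: run_cat R1 _|split].
- by rewrite L1; apply: run_ext R2 => i; rewrite -E -E1.
- by rewrite map_cat last_cat L1.
- by move=> i; rewrite sumv_cat addrA E1 E E2.
Qed.

Lemma Reach_mono (Sigma : finType) k (V : VASS Sigma k) (p q : state V) v v' u x :
  Reach p v x q v' -> (forall i, v i <= u i) -> Reach p u x q (fun i => u i + (v' i - v i)).
Proof.
move=> [ts [R [L E]]] le; exists ts; split; [exact: run_mono R|split => //].
by move=> i; rewrite -E; congr (_ + _); rewrite addrC addKr.
Qed.

Lemma Reach_ext (Sigma : finType) k (V : VASS Sigma k) (p q : state V) v v' v'' x :
  Reach p v x q v' -> v' =1 v'' -> Reach p v x q v''.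
Proof. by move=> [ts [R [L E]]] E'; exists ts; split => //; split => // i; rewrite E. Qed.

Lemma Reach_accept (Sigma : finType) k (V : VASS Sigma k) w q v' :
  Reach (init V) (fun _ => 0) w q v' -> final V q -> accepts V w.
Proof. by move=> [ts [R [L _]]] F; exists ts; split => //; rewrite L. Qed.

Lemma resolve_cat (Sigma : finType) k (V : VASS Sigma k) r (ts : seq (transition V)) w1 w2 :
  resolve r ts (w1 ++ w2) = resolve r (resolve r ts w1) w2.
Proof. by elim: w1 ts => //= a w1 IH ts; rewrite IH. Qed.

Lemma resolve_pre (Sigma : finType) k (V : VASS Sigma k) r (ts : seq (transition V)) w :
  exists e, resolve r ts w = ts ++ e /\ size e = size w.
Proof.
elim: w ts => [|a w IH] ts /=; first by exists [::]; rewrite cats0.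
have [e [-> He]] := IH (rcons ts (r ts a)).
by exists (r ts a :: e); rewrite cat_rcons /= He.
Qed.

Lemma cat_same_size (T : Type) (s1 s2 t1 t2 : seq T) :
  s1 ++ s2 = t1 ++ t2 -> size s1 = size t1 -> s1 = t1 /\ s2 = t2.
Proof.
move=> E S; have E1 : s1 = t1.
  by have := congr1 (take (size s1)) E; rewrite take_size_cat // S take_size_cat.
split => //; have := congr1 (drop (size s1)) E.
by rewrite drop_size_cat // S drop_size_cat.
Qed.

Definition Good k (V : VASS bool k) (r : seq (transition V) -> bool -> transition V) :=
  is_resolver r /\ forall w, accepts V w <-> Lab w.

Definition RT k (V : VASS bool k) (r : seq (transition V) -> bool -> transition V) w :=
  resolve r [::] w.
Definition st k (V : VASS bool k) (r : seq (transition V) -> bool -> transition V) w :=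
  last (init V) (map (@tdst _ _ V) (RT r w)).
Definition vc k (V : VASS bool k) (r : seq (transition V) -> bool -> transition V) w i :=
  sumv (RT r w) i.

Lemma RT_size k (V : VASS bool k) r w : size (@RT k V r w) = size w.
Proof. by rewrite /RT; have [e [-> ->]] := resolve_pre r [::] w. Qed.

Lemma RT_cat k (V : VASS bool k) r w x : exists e, @RT k V r (w ++ x) = RT r w ++ e.
Proof.
rewrite /RT resolve_cat.
by have [e [-> _]] := resolve_pre r (resolve r [::] w) x; exists e.
Qed.

Lemma RT_run k (V : VASS bool k) r : Good r -> forall w, is_run w (@RT k V r w).
Proof.
move=> [[_ Hr] HL] w.
have [ar _] := Hr _ ((HL _).2 (Lab_rcons_a w)).
have [e E] := RT_cat r w [:: la].
move: ar; rewrite -/(RT r _) E => ar.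
have [ts1 [ts2 [E2 [R1 _]]]] := run_split ar.
have [-> _] := cat_same_size E2 (esym (etrans (run_size R1) (esym (RT_size r w)))).
exact: R1.
Qed.

Lemma vc_nonneg k (V : VASS bool k) r : Good r -> forall w i, 0 <= @vc k V r w i.
Proof.
move=> G w i; have := run_nonneg (RT_run G w) (fun _ => lexx 0) i.
by rewrite add0r.
Qed.

Lemma Reach_RT k (V : VASS bool k) r : Good r ->
  forall w, Reach (init V) (fun _ => 0) w (@st k V r w) (vc r w).
Proof.
move=> G w; exists (RT r w); split; first exact: RT_run.
by split => // i; rewrite add0r.
Qed.

Lemma final_st k (V : VASS bool k) r : Good r -> forall w, Lab w -> final V (@st k V r w).
Proof. by move=> [[_ Hr] HL] w /(HL w).2 /Hr []. Qed.

Lemma Reach_frag k (V : VASS bool k) r : Good r -> forall w x v,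
  (forall i, @vc k V r w i <= v i) ->
  Reach (st r w) v x (st r (w ++ x)) (fun i => v i + (vc r (w ++ x) i - vc r w i)).
Proof.
move=> G w x v le.
have R := RT_run G (w ++ x).
have [e E] := RT_cat r w x.
rewrite E in R.
have [ts1 [ts2 [E2 [R1 R2]]]] := run_split R.
have [E3 E4] := cat_same_size E2 (esym (etrans (run_size R1) (esym (RT_size r w)))).
subst ts1 ts2.
exists e; split; [|split].
- apply: run_mono R2 => i; rewrite add0r; exact: le.
- by rewrite /st E map_cat last_cat.
- by move=> i; rewrite /vc E sumv_cat; congr (_ + _); rewrite addrC addKr.
Qed.

Definition Mb k (V : VASS bool k) : nat :=
  (\sum_(t <- trans V) \sum_(c < k) `|tvec t c|)%N.

Lemma Mb_ge k (V : VASS bool k) t c : t \in trans V -> (`|tvec t c| <= Mb V)%N.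
Proof.
rewrite /Mb; elim: (trans V) => // t' s IH; rewrite in_cons big_cons => /orP[/eqP->|/IH h].
- by rewrite (bigD1 c) //= -addnA leq_addr.
- exact: leq_trans h (leq_addl _ _).
Qed.

Lemma vc_step k (V : VASS bool k) r : Good r -> forall w x c,
  @vc k V r w c - (Mb V)%:Z <= vc r (w ++ [:: x]) c.
Proof.
move=> G w x c.
have [ts [R [_ E]]] := Reach_frag G [:: x] (fun i => lexx (vc r w i)).
case: ts R E => [|t [|t' ts]] //=; last by case=> _ _ _ _ [].
move=> [H1 _ _ _ _] E.
have := E c; rewrite sumv_cons sumv_nil addr0 => E'.
have M := Mb_ge c H1.
have -> : vc r (w ++ [:: x]) c = vc r w c + tvec t c.
  by rewrite E' addrC subrK.
rewrite lerD2l; move: M; set y := tvec t c; lia.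
Qed.

Definition nrm k (V : VASS bool k) r w : nat := (\sum_(c < k) `|@vc k V r w c|)%N.

Lemma vc_le_nrm k (V : VASS bool k) r : Good r -> forall w c, @vc k V r w c <= (nrm r w)%:Z.
Proof.
move=> G w c; have h : (`|vc r w c| <= nrm r w)%N.
  by rewrite /nrm (bigD1 c) //= leq_addr.
have := vc_nonneg G w c; lia.
Qed.

Definition BlockSpec k (V : VASS bool k) (r : seq (transition V) -> bool -> transition V)
  (u : seq bool) (T : nat) (p : nat * nat) : Prop :=
  [/\ (0 < p.1)%N, (p.1 < p.2)%N,
      st r (u ++ nseq p.1 la) = st r (u ++ nseq p.2 la),
      (forall c, vc r (u ++ nseq p.1 la) c <= vc r (u ++ nseq p.2 la) c) &
      (forall c, vc r (u ++ nseq p.1 la) c < vc r (u ++ nseq p.2 la) c ->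
                 T%:Z <= vc r (u ++ nseq p.1 la) c)].

Lemma blockA k (V : VASS bool k) r : Good r -> forall u T, exists p, @BlockSpec k V r u T p.
Proof.
move=> G u T.
pose f i c := `|vc r (u ++ nseq i.+1 la) c|%N.
pose lab i := (st r (u ++ nseq i.+1 la),
               [ffun c => (inord (minn (f i c) T) : 'I_T.+1)]).
have [i [j [ij [El Ef]]]] := dickson f lab.
exists (i.+1, j.+1); split => //=.
- by have := congr1 fst El.
- move=> c; have := Ef c; rewrite /f /=.
  have /= := vc_nonneg G (u ++ nseq i.+1 la) c; have /= := vc_nonneg G (u ++ nseq j.+1 la) c.
  lia.
- move=> c lt.
  have := congr1 snd El; rewrite /lab /= => /ffunP /(_ c); rewrite !ffunE => /(congr1 (@nat_of_ord _)).
  rewrite !inordK; last 2 first.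
    by rewrite ltnS geq_minr.
    by rewrite ltnS geq_minr.
  rewrite /f /= => Hm; move: lt Hm.
  have /= := vc_nonneg G (u ++ nseq i.+1 la) c; have /= := vc_nonneg G (u ++ nseq j.+1 la) c.
  lia.
Qed.

Fixpoint wB (sel : seq bool -> nat -> nat * nat) (nr : seq bool -> nat) (M : nat) (l : nat)
  : seq bool * nat :=
  match l with
  | 0 => ([::], 0%N)
  | l'.+1 => let p := wB sel nr M l' in
             let B := maxn p.2 (nr p.1) in
             (p.1 ++ nseq (sel p.1 (B + M + 1)%N).1 la ++ [:: lb], B)
  end.

Lemma wB_bound sel nr M : forall l i, (i < l)%N ->
  (nr (wB sel nr M i).1 <= (wB sel nr M l).2)%N.
Proof.
elim=> // l IH i; rewrite ltnS leq_eqVlt => /orP[/eqP->|/IH h] /=.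
- exact: leq_maxr.
- exact: leq_trans h (leq_maxl _ _).
Qed.

Lemma wB_pre sel nr M : forall j i, (i <= j)%N ->
  exists y, (wB sel nr M j).1 = (wB sel nr M i).1 ++ y /\ endb y.
Proof.
elim=> [|j IH] i.
- by rewrite leqn0 => /eqP->; exists [::]; rewrite cats0.
- rewrite leq_eqVlt => /orP[/eqP->|]; first by exists [::]; rewrite cats0.
  rewrite ltnS => /IH [y [E hy]]; rewrite /= E.
  eexists; split; first by rewrite -catA.
  by apply: endb_cat => //; rewrite /endb last_cat.
Qed.

Fixpoint rep (y : seq bool) m := if m is m'.+1 then rep y m' ++ y else [::].

Lemma endb_rep y m : endb y -> endb (rep y m).
Proof. by move=> hy; elim: m => //= m IH; apply: endb_cat. Qed.

Lemma endbW sel nr M l : endb (wB sel nr M l).1.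
Proof. by have [y [-> hy]] := wB_pre sel nr M (leq0n l). Qed.

Lemma noHD k (V : VASS bool k) r : @Good k V r -> False.
Proof.
move=> HG.
have HS : forall u T, {p | BlockSpec r u T p}.
  by move=> u T; apply: constructive_indefinite_description; exact: blockA.
pose sel u T := sval (HS u T).
pose nr := nrm r.
pose W l := (wB sel nr (Mb V) l).1.
pose B l := (wB sel nr (Mb V) l).2.
have [l1 [l2 [l12 [Est Evc]]]] :=
  dickson (fun l c => `|vc r (W l) c|%N) (fun l => st r (W l)).
case: l2 l12 Est Evc => // l' l12 Est Evc.
set u := W l'.
set T := (B l'.+1 + Mb V + 1)%N.
have EW2 : W l'.+1 = u ++ nseq (sel u T).1 la ++ [:: lb] by [].
have Hsp : BlockSpec r u T (sel u T) := svalP (HS u T).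
have hB : forall c, vc r (W l1) c <= (B l'.+1)%:Z.
  move=> c; apply: le_trans (vc_le_nrm HG _ c) _.
  by rewrite lez_nat; apply: (wB_bound sel nr (Mb V) l12).
have [y [Ey hy]] := wB_pre sel nr (Mb V) (ltnW l12).
have [z [Ez hz]] := wB_pre sel nr (Mb V) (l12 : (l1 <= l')%N).
have hG : endb (W l1) := endbW sel nr (Mb V) l1.
have hu : endb u := endbW sel nr (Mb V) l'.
move: EW2 Hsp; case: (sel u T) => s t /= EW2 [/= s0 st_ stE vcle vclt].
have Ey' : W l'.+1 = W l1 ++ y := Ey.
have Ez' : u = W l1 ++ z := Ez.
have Est' : st r (W l1) = st r (W l'.+1) := Est.
have Evc' : forall c, (`|vc r (W l1) c| <= `|vc r (W l'.+1) c|)%N := Evc.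
have hG' : endb (W l1) := hG.
clear Ey Ez Est Evc hG.
move: (W l1) (W l'.+1) Ey' Ez' Est' Evc' hB hG' EW2 => G W2 Ey Ez Est Evc hB hG EW2.
subst W2.
pose D c := vc r (G ++ y) c - vc r G c.
have hst : st r (G ++ y) = st r G by rewrite Est.
have hD0 : forall c, 0 <= D c.
  move=> c; have := Evc c; rewrite /D.
  have := vc_nonneg HG G c; have := vc_nonneg HG (G ++ y) c; lia.
have key : forall c, vc r (u ++ nseq s la) c < vc r (u ++ nseq t la) c -> 1 <= D c.
  move=> c /vclt h1; have h2 := vc_step HG (u ++ nseq s la) lb c.
  rewrite -catA -EW2 in h2; have h3 := hB c; rewrite /D /T in h1 h3 *; lia.
pose m := nrm r (u ++ nseq t la).
have hm : forall c, vc r (u ++ nseq t la) c <= m%:Z by move=> c; exact: vc_le_nrm.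
have Rloop : forall n, Reach (st r G) (vc r G) (rep y n) (st r G)
                         (fun c => vc r G c + n%:Z * D c).
  elim=> [|n IH] /=.
    by apply: Reach_nil => c; rewrite mul0r addr0.
  have le : forall c, vc r G c <= vc r G c + n%:Z * D c.
    by move=> c; rewrite lerDl; apply: mulr_ge0.
  have R := Reach_frag HG y le; rewrite hst in R.
  apply: Reach_cat IH (Reach_ext R _) _ => // c.
  rewrite /D -addn1 PoszD; ring.
have R1 := Reach_RT HG G.
have le3 : forall c, vc r G c <= vc r G c + m%:Z * D c.
  by move=> c; rewrite lerDl; apply: mulr_ge0.
have R3 := Reach_frag HG z le3; rewrite -Ez in R3.
have le4 : forall c, vc r u c <= vc r G c + m%:Z * D c + (vc r u c - vc r G c).
  by move=> c; have := le3 c; lia.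
have R4 := Reach_frag HG (nseq s la) le4; rewrite stE in R4.
have le5 : forall c, vc r (u ++ nseq t la) c <=
   vc r G c + m%:Z * D c + (vc r u c - vc r G c) +
   (vc r (u ++ nseq s la) c - vc r u c).
  move=> c; have h0 := hD0 c; have h1 := hm c; have h2 := vcle c.
  have h3 := vc_nonneg HG (u ++ nseq s la) c.
  case: (ltrP (vc r (u ++ nseq s la) c) (vc r (u ++ nseq t la) c)) => h4.
  - have h5 := key c h4; nia.
  - have : 0 <= m%:Z * D c by apply: mulr_ge0.
    lia.
have R5 := Reach_frag HG (nseq t lb) le5.
have Rall := Reach_cat (Reach_cat (Reach_cat (Reach_cat R1 (Rloop m) (fun c => erefl))
                          R3 (fun c => erefl)) R4 (fun c => erefl)) R5 (fun c => erefl).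
have Hf : final V (st r ((u ++ nseq t la) ++ nseq t lb)).
  have := final_st HG (w := (u ++ nseq t la) ++ nseq t lb); apply; rewrite -catA;  apply/Lab_char => //; lia.
have RA := Reach_accept Rall Hf; case: HG => _ HL; have := (HL _).1 RA.
have hX : endb ((G ++ rep y m) ++ z).
  by apply: endb_cat => //; apply: endb_cat => //; apply: endb_rep.
rewrite -catA => /(Lab_char _ hX s0); lia.
Qed.

Inductive St := sI | sP | sQ | sA | sB.
Definition s2o (s : St) : 'I_5 :=
  match s with sI => inord 0 | sP => inord 1 | sQ => inord 2 | sA => inord 3 | sB => inord 4 end.
Definition o2s (i : 'I_5) : option St :=
  match nat_of_ord i with 0%N => Some sI | 1%N => Some sP | 2%N => Some sQ
  | 3%N => Some sA | 4%N => Some sB | _ => None end.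
Lemma s2oK : pcancel s2o o2s. Proof. by case; rewrite /o2s /= inordK. Qed.
HB.instance Definition _ := Finite.copy St (pcan_type s2oK).

Definition vec1 (d : int) : {ffun 'I_1 -> int} := [ffun _ => d].

Definition tr1 : seq (St * bool * {ffun 'I_1 -> int} * St) :=
  [:: (sI, la, vec1 0, sQ); (sI, lb, vec1 0, sP); (sI, la, vec1 1, sA);
      (sP, la, vec1 0, sQ); (sP, lb, vec1 0, sP); (sP, la, vec1 1, sA);
      (sQ, la, vec1 0, sQ); (sQ, lb, vec1 0, sP);
      (sA, la, vec1 1, sA); (sA, lb, vec1 (-1), sB); (sB, lb, vec1 (-1), sB)].

Definition fin1 (s : St) : bool := match s with sI | sA | sB => true | _ => false end.

Definition V1 : VASS bool 1 := @MkVASS bool 1 St sI fin1 tr1.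

Definition Inv (p : St) (h : seq bool) (c : int) : Prop :=
  match p with
  | sI => h = [::] /\ c = 0
  | sP => last la h = lb /\ c = 0
  | sQ => last lb h = la /\ c = 0
  | sA => exists u n, endb u /\ (0 < n)%N /\ h = u ++ nseq n la /\ c = n%:Z
  | sB => exists u n m, [/\ endb u, (0 < m)%N, (m <= n)%N,
                         h = u ++ nseq n la ++ nseq m lb & c = n%:Z - m%:Z]
  end.

Lemma nseq_rc (x : bool) n : nseq n x ++ [:: x] = nseq n.+1 x.
Proof. by elim: n => //= n ->. Qed.

Lemma inv_step (t : transition V1) h c :
  t \in trans V1 -> Inv (tsrc t) h c -> 0 <= c + tvec t ord0 ->
  Inv (tdst t) (h ++ [:: tlab t]) (c + tvec t ord0).
Proof.
rewrite /= /tr1 !inE.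
do ![case/orP => [/eqP -> /=|]]; last move/eqP => ->.
all: rewrite /tsrc /tdst /tlab /tvec /= ?ffunE ?addr0.
- by case=> -> ->.
- by case=> -> ->.
- by case=> -> -> _; exists [::], 1%N.
- by case=> _ ->; rewrite last_cat.
- by case=> _ ->; rewrite last_cat.
- case=> hl -> _; exists h, 1%N; split => //.
  by case: h hl => //= x h; rewrite /endb.
- by case=> _ ->; rewrite last_cat.
- by case=> _ ->; rewrite last_cat.
- case=> u [n [hu [hn [-> ->]]]] _; exists u, n.+1; split => //; split => //.
  by rewrite -catA nseq_rc; split => //; lia.
- case=> u [n [hu [hn [-> ->]]]] _; exists u, n, 1%N; split => //.
  by rewrite -catA.
- case=> u [n [m [hu hm hmn -> ->]]] h0.
  exists u, n, m.+1; split => //; first lia.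
  + by rewrite -!catA nseq_rc.
  + lia.
Qed.

Lemma inv_run w : forall (ts : seq (transition V1)) p v h,
  is_run_from p v w ts -> Inv p h (v ord0) ->
  exists c, Inv (last p (map (@tdst _ _ V1) ts)) (h ++ w) c.
Proof.
elim: w => [|x w IH] [|t ts] p v h //=.
- by move=> _ H; exists (v ord0); rewrite cats0.
- case=> H1 H2 H3 H4 H5 Hi.
  rewrite -H2 in Hi.
  have Hi' := inv_step H1 Hi (H4 ord0).
  rewrite H3 in Hi'.
  have [c Hc] := IH _ _ _ (h ++ [:: x]) H5 Hi'.
  by exists c; rewrite -cat1s catA.
Qed.

Lemma V1_sound w : accepts V1 w -> Lab w.
Proof.
case=> ts [R F].
have [c] := inv_run (h := [::]) R (conj erefl erefl).
move: F; rewrite /=.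
case: (last sI (map (@tdst _ _ V1) ts)) => //= _.
- by case=> ->; left.
- case=> u [n [hu [hn [-> _]]]]; rewrite -[u ++ _]cats0 -catA.
  by apply/(Lab_char 0 hu hn).
- case=> u [n [m [hu hm hmn -> _]]].
  apply/(Lab_char m hu) => //; lia.
Qed.

Lemma Reach_step (Sigma : finType) k (V : VASS Sigma k) (t : transition V) v :
  t \in trans V -> (forall i, 0 <= v i + tvec t i) ->
  Reach (tsrc t) v [:: tlab t] (tdst t) (fun i => v i + tvec t i).
Proof.
move=> H1 H4; exists [:: t]; split => //=; split => // i.
by rewrite sumv_cons sumv_nil addr0.
Qed.

Definition cv (c : int) : 'I_1 -> int := fun _ => c.

Lemma step1 (p q : St) x (d c : int) :
  (p, x, vec1 d, q) \in tr1 -> 0 <= c + d ->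
  Reach (V:=V1) p (cv c) [:: x] q (cv (c + d)).
Proof.
move=> H1 H4; have := @Reach_step _ _ V1 (p, x, vec1 d, q) (cv c) H1.
rewrite /tvec /= => R; apply: Reach_ext (R _) _ => i; rewrite ?ffunE //.
Qed.

Lemma pre_reach u : exists q, Reach (V:=V1) sI (cv 0) u q (cv 0) /\
  [\/ q = sI, q = sP | q = sQ] /\ (endb u -> q = sI \/ q = sP).
Proof.
elim/last_ind: u => [|u x [q [R [Hq He]]]].
  by exists sI; split; [apply: Reach_nil|split; [constructor 1|left]].
exists (if x then sQ else sP); split; last first.
  split; first by case: x; [constructor 3|constructor 2].
  by rewrite /endb last_rcons => ->; right.
have S : Reach (V:=V1) q (cv 0) [:: x] (if x then sQ else sP) (cv (0 + 0)).
  by apply: step1 => //; case: Hq => ->; case: x; rewrite /tr1 !inE eqxx ?orbT.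
rewrite -cats1; apply: Reach_cat R (Reach_ext S _) _ => //.
Qed.

Lemma a_run j c : 0 <= c -> Reach (V:=V1) sA (cv c) (nseq j la) sA (cv (c + j%:Z)).
Proof.
elim: j c => [|j IH] c c0 /=; first by apply: Reach_nil => i; rewrite addr0.
have S : Reach (V:=V1) sA (cv c) [:: la] sA (cv (c + 1)).
  by apply: step1; [rewrite /tr1 !inE eqxx ?orbT|lia].
rewrite -cat1s; apply: Reach_ext (Reach_cat S (IH (c + 1) _) (fun _ => erefl)) _.
- lia.
- by move=> i; rewrite /cv; lia.
Qed.

Lemma b_run j c : (j%:Z <= c) -> Reach (V:=V1) sB (cv c) (nseq j lb) sB (cv (c - j%:Z)).
Proof.
elim: j c => [|j IH] c c0 /=; first by apply: Reach_nil => i; rewrite subr0.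
have S : Reach (V:=V1) sB (cv c) [:: lb] sB (cv (c + -1)).
  by apply: step1; [rewrite /tr1 !inE eqxx ?orbT|lia].
rewrite -cat1s; apply: Reach_ext (Reach_cat S (IH (c + -1) _) (fun _ => erefl)) _.
- lia.
- by move=> i; rewrite /cv; lia.
Qed.

Lemma V1_complete w : Lab w -> accepts V1 w.
Proof.
case=> [->|[u [n [m [hu [hn [hmn ->]]]]]]].
  by exists [::].
have hu' : endb u by case: hu => [->|[u' ->]] //; rewrite /endb last_rcons.
have [q [R [_ Hq]]] := pre_reach u.
case: n hn hmn => // n _ hmn.
have R2 : Reach (V:=V1) q (cv 0) [:: la] sA (cv 1).
  apply: Reach_ext (step1 (d := 1) _ _) _ => //.
  by case: (Hq hu') => ->; rewrite /tr1 !inE eqxx ?orbT.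
have R3 := Reach_cat (Reach_cat R R2 (fun _ => erefl)) (a_run n (c := 1) ler01) (fun _ => erefl).
case: m hmn => [|m] hmn.
  have -> : u ++ nseq n.+1 la ++ nseq 0 lb = (u ++ [:: la]) ++ nseq n la.
    by rewrite cats0 -catA.
  exact: Reach_accept R3 _.
have R4 : Reach (V:=V1) sA (cv (1 + n%:Z)) [:: lb] sB (cv (1 + n%:Z - 1)).
  apply: Reach_ext (step1 (d := -1) _ _) _ => //; try lia.
  by rewrite /tr1 !inE eqxx ?orbT.
have R5 := b_run (j := m) (c := 1 + n%:Z - 1) ltac:(lia).
have R6 := Reach_cat (Reach_cat R3 R4 (fun _ => erefl)) R5 (fun _ => erefl).
have -> : u ++ nseq n.+1 la ++ nseq m.+1 lb =
  (((u ++ [:: la]) ++ nseq n la) ++ [:: lb]) ++ nseq m lb by rewrite -!catA.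
exact: Reach_accept R6 _.
Qed.

Lemma CN1_Lab : CN 1 Lab.
Proof. by exists V1 => w; split; [exact: V1_sound|exact: V1_complete]. Qed.

Local Close Scope ring_scope.

Theorem mainTheorem4 : CN 1 Lab /\ ~ CH Lab.
Proof.
split; first exact: CN1_Lab.
case=> k [_ [V [[r Hr] HL]]].
exact: (noHD (conj Hr HL)).
Qed.
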